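(* Let $n\ge 3$ and $s,t\in S_n$ with $[s,t]=sts^{-1}t^{-1}=(z\;y\;x)$, where $x,y,z$ lie in the same cycle of $s$ in this cyclic order, i.e. $d_s(x,y)+d_s(y,z)+d_s(z,x)=d_s(x,x)$, and assume $\langle s,t\rangle$ is transitive on $\{1,\dots,n\}$. Then the group $\langle s,t\rangle$ is primitive if and only if $s$ is an $n$-cycle and $\gcd\big(d_s(x,y),\,d_s(y,z),\,d_s(z,x)\big)=1$.
   Context: Permutations compose as functions. For $s\in S_n$, $d_s(u,v)=\min\{d\ge1: s^d(u)=v\}$ if $u,v$ lie in the same cycle of $s$, and $\infty$ otherwise. A permutation group $G\le S_n$ is primitive if the only subsets $\Delta\neq\emptyset$ of $\{1,\dots,n\}$ with $g(\Delta)=\Delta$ or $g(\Delta)\cap\Delta=\emptyset$ for every $g\in G$ are the singletons and the whole set. *)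

(* Defs.v *)
From mathcomp Require Import all_boot all_fingroup.
Set Implicit Arguments. Unset Strict Implicit. Unset Printing Implicit Defensive.
Local Open Scope group_scope.

(* Convention: MathComp multiplies permutations left-to-right:
   (s * t) u = t (s u).  Hence the functional composition
   s o t o s^-1 o t^-1 of the paper is the perm t^-1 * s^-1 * t * s. *)
Definition commf (T : finType) (s t : {perm T}) : {perm T} :=
  t^-1 * s^-1 * t * s.

Definition is_3cycle (T : finType) (c : {perm T}) (z y x : T) : Prop :=
  [/\ z != y, y != x & z != x] /\
  [/\ c z = y, c y = x, c x = z &
      forall u, u != x -> u != y -> u != z -> c u = u].

Definition is_ds (T : finType) (s : {perm T}) (u v : T) (d : nat) : Prop :=
  [/\ (0 < d)%N, (s ^+ d) u = v &
      forall d', (0 < d')%N -> (d' < d)%N -> (s ^+ d') u != v].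

Definition full_cycle (T : finType) (s : {perm T}) : Prop :=
  exists u, porbit s u = [set: T].

Definition transitive_on (T : finType) (G : {set {perm T}}) : Prop :=
  forall u v : T, exists2 g, g \in G & g u = v.

Definition primitive_grp (T : finType) (G : {set {perm T}}) : Prop :=
  forall D : {set T}, D != set0 ->
    (forall g, g \in G -> (g @: D = D \/ [disjoint g @: D & D])) ->
    #|D| = 1%N \/ D = [set: T].

(* Main.v *)
Require Import Defs.
From mathcomp Require Import all_boot all_fingroup.
Local Open Scope group_scope.
Set Implicit Arguments. Unset Strict Implicit.

Lemma rel_block (T : finType) (A : {set {perm T}}) (U : eqType) (f : T -> U) (x : T) :
  (forall g, g \in A -> forall u v, f u = f v -> f (g u) = f (g v)) ->
  forall g, g \in <<A>> ->
  g @: [set v | f v == f x] = [set v | f v == f x] \/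
  [disjoint g @: [set v | f v == f x] & [set v | f v == f x]].
Proof.
move=> hA.
pose H := [set g : {perm T} | [forall u, forall v, (f u == f v) ==> (f (g u) == f (g v))]].
have gH : group_set H.
  apply/group_setP; split.
    by rewrite inE; apply/forallP=> u; apply/forallP=> v; rewrite !perm1 implybb.
  move=> g h; rewrite !inE => /forallP Hg /forallP Hh.
  apply/forallP=> u; apply/forallP=> v; apply/implyP=> eu; rewrite !permM.
  move: (Hh (g u)) => /forallP /(_ (g v)) /implyP; apply.
  by move: (Hg u) => /forallP /(_ v) /implyP; apply.
have sAH : <<A>> \subset Group gH.
  rewrite gen_subG; apply/subsetP=> g gA; rewrite inE.
  apply/forallP=> u; apply/forallP=> v; apply/implyP=> /eqP eu.
  by rewrite (hA g gA u v eu).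
move=> g /(subsetP sAH); rewrite inE => Hg.
have Hg' u v : f u = f v -> f (g u) = f (g v).
  move=> eu; move/forallP: Hg => /(_ u) /forallP /(_ v).
  by rewrite eu eqxx => /eqP.
case: (boolP [disjoint _ & _]) => hd; [by right|left].
move: hd; rewrite -setI_eq0 => /set0Pn [w /setIP [/imsetP [v vD ->] gvD]].
move: vD gvD; rewrite !inE => /eqP fv /eqP fgv.
apply/eqP; rewrite eqEcard card_imset ?leqnn ?andbT; last exact: perm_inj.
apply/subsetP=> _ /imsetP [u uD ->]; rewrite inE; move: uD; rewrite inE => /eqP fu.
by rewrite (Hg' u v) ?fgv // fu fv.
Qed.

Lemma t_step (T : finType) (s t : {perm T}) v : commf s t (t (s v)) = s (t v).
Proof. by rewrite /commf !permM !permK. Qed.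

Lemma fix_pow (T : finType) (p : {perm T}) x k : p x = x -> (p ^+ k) x = x.
Proof. by move=> px; elim: k => [|k IH]; rewrite ?expg0 ?perm1 // expgSr permM IH. Qed.

Lemma pow_add (T : finType) (p : {perm T}) x i j : (p ^+ (i + j)) x = (p ^+ j) ((p ^+ i) x).
Proof. by rewrite expgnDr permM. Qed.

Lemma pow_mod (T : finType) (s : {perm T}) x e :
  (s ^+ e) x = x -> forall i, (s ^+ i) x = (s ^+ (i %% e)) x.
Proof.
move=> se i; rewrite {1}(divn_eq i e) pow_add; congr (_ _).
by rewrite mulnC expgnA fix_pow.
Qed.

Lemma pow_inj (T : finType) (s : {perm T}) x e i j :
  is_ds s x x e -> (s ^+ i) x = (s ^+ j) x -> i %% e = j %% e.
Proof.
case=> e0 se hmin.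
have cl i' j' : (i' < j' < e)%N -> (s ^+ i') x != (s ^+ j') x.
  case/andP=> ij je; apply/eqP => eq.
  have := hmin (j' - i')%N; rewrite subn_gt0 ij => /(_ isT).
  rewrite (leq_ltn_trans (leq_subr _ _) je) => /(_ isT) /eqP; apply.
  apply: (@perm_inj _ (s ^+ i')); rewrite -pow_add subnK ?eq //; exact: ltnW.
rewrite (pow_mod se i) (pow_mod se j) => eq.
case: (ltngtP (i %% e) (j %% e)) => // h; exfalso.
  by move: (cl _ _ (andb_true_intro (conj h (ltn_pmod _ e0)))); rewrite eq eqxx.
by move: (cl _ _ (andb_true_intro (conj h (ltn_pmod _ e0)))); rewrite eq eqxx.
Qed.

Definition posn (T : finType) (s : {perm T}) (x : T) (e : nat) (w : T) : nat :=
  if [pick k : 'I_e | (s ^+ k) x == w] is Some k then val k else 0%N.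

Lemma posn_spec (T : finType) (s : {perm T}) x e w :
  (s ^+ e) x = x -> (0 < e)%N -> w \in porbit s x -> (s ^+ posn s x e w) x = w.
Proof.
move=> se e0 /porbitP [i ->]; rewrite /posn; case: pickP => [k /eqP //|none].
by move: (none (Ordinal (ltn_pmod i e0))); rewrite /= -pow_mod // eqxx.
Qed.

Lemma posn_mod (T : finType) (s : {perm T}) x e i :
  is_ds s x x e -> posn s x e ((s ^+ i) x) %% e = i %% e.
Proof.
move=> hd; apply: (pow_inj hd); case: (hd) => e0 se _.
by rewrite posn_spec // mem_porbit.
Qed.

Unset Implicit Arguments.

Theorem mainTheorem3 (n : nat) (s t : {perm 'I_n}) (x y z : 'I_n)
    (a b c e : nat) :
  (3 <= n)%N ->
  is_3cycle (commf s t) z y x ->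
  is_ds s x y a -> is_ds s y z b -> is_ds s z x c -> is_ds s x x e ->
  (a + b + c = e)%N ->
  transitive_on <<[set s; t]>> ->
  (primitive_grp <<[set s; t]>> <->
     (full_cycle s /\ gcdn (gcdn a b) c = 1%N)).
Proof.
move=> n3 [[zy yx zx] [cz cy cx cfix]] [a0 sa _] [b0 sb _] [c0 sc _] dse habc _.
set G := <<[set s; t]>>.
set cc := commf s t in cz cy cx cfix *.
have sG : s \in G by apply: mem_gen; rewrite !inE eqxx.
have tG : t \in G by apply: mem_gen; rewrite !inE eqxx orbT.
have cG : cc \in G by rewrite /cc /commf; repeat apply: groupM; rewrite ?groupV.
have fc (U : Type) (f : 'I_n -> U) : f x = f y -> f y = f z -> forall q, f (cc q) = f q.
  move=> fxy fyz q.
  case: (eqVneq q x) => [->|qx]; first by rewrite cx fxy fyz.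
  case: (eqVneq q y) => [->|qy]; first by rewrite cy fxy.
  case: (eqVneq q z) => [->|qz]; first by rewrite cz fyz.
  by rewrite cfix.
have zab : z = (s ^+ (a + b)) x by rewrite pow_add sa sb.
have Psub (D : {set 'I_n}) i j : (s ^+ (i + j)) @: D = D -> (s ^+ i) @: D = D -> (s ^+ j) @: D = D.
  move=> hij hi; rewrite -{1}hi -imset_comp -{2}hij; apply: eq_imset => w /=.
  by rewrite pow_add.
have Padd (D : {set 'I_n}) i j : (s ^+ i) @: D = D -> (s ^+ j) @: D = D -> (s ^+ (i + j)) @: D = D.
  move=> hi hj; rewrite -{2}hj -{2}hi -imset_comp; apply: eq_imset => w /=.
  by rewrite pow_add.
have Pmul (D : {set 'I_n}) i k : (s ^+ i) @: D = D -> (s ^+ (k * i)) @: D = D.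
  move=> hi; elim: k => [|k IH]; first by rewrite mul0n expg0 -[RHS]imset_id; apply: eq_imset => w; rewrite perm1.
  by rewrite mulSn Padd.
have two (D : {set 'I_n}) : x \in D -> y \in D -> #|D| != 1%N.
  move=> xD yD; apply/eqP=> D1.
  have : (#|[set x; y]| <= #|D|)%N.
    by apply: subset_leq_card; apply/subsetP=> w; rewrite !inE => /orP [] /eqP ->.
  by rewrite cards2 D1 eq_sym yx.
have blockP (D : {set 'I_n}) g : g \in G ->
   (g @: D = D \/ [disjoint g @: D & D]) -> forall u, u \in D -> g u \in D -> g @: D = D.
  move=> gG [//|hd] u uD guD; exfalso.
  move: hd; rewrite -setI_eq0 => /eqP hd.
  have : g u \in g @: D :&: D by rewrite inE guD imset_f.
  by rewrite hd inE.
split.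
  move=> prim.
  have ps q : porbit s (s q) = porbit s q by have := porbit_perm s 1 q; rewrite expg1.
  have fcs : full_cycle s.
    have fcp := fc _ (porbit s) (esym (etrans (congr1 _ (esym sa)) (porbit_perm _ _ _)))
       (esym (etrans (congr1 _ (esym sb)) (porbit_perm _ _ _))).
    have key i w : porbit s (t ((s ^+ i) w)) = porbit s (t w).
      elim: i w => [|i IH] w; first by rewrite expg0 perm1.
      by rewrite expgSr permM -(fcp (t (s _))) t_step ps IH.
    have hgen : forall g, g \in [set s; t] -> forall u v,
        porbit s u = porbit s v -> porbit s (g u) = porbit s (g v).
      move=> g; rewrite !inE => /orP [] /eqP -> u v huv; first by rewrite !ps huv.
      have : v \in porbit s u by rewrite -eq_porbit_mem huv.
      by case/porbitP => i ->; rewrite key.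
    have := prim _ _ (@rel_block _ _ _ (porbit s) x hgen).
    case.
    - by apply/set0Pn; exists x; rewrite inE.
    - move=> D1; have h := two [set v | porbit s v == porbit s x].
      rewrite D1 in h; move: h; rewrite !inE eqxx -{1}sa porbit_perm eqxx.
      by move=> /(_ isT isT).
    - move=> DT; exists x; apply/setP => w; rewrite inE.
      have : w \in [set v | porbit s v == porbit s x] by rewrite DT inE.
      by rewrite inE eq_porbit_mem.
  split => //.
  have pxT : porbit s x = setT.
    by case: fcs => u0 hu0; rewrite -hu0; apply/eqP; rewrite eq_porbit_mem hu0 inE.
  set d := gcdn (gcdn a b) c.
  have d0 : (0 < d)%N by rewrite gcdn_gt0 c0 orbT.
  case: (ltngtP d 1) => // hd1; first by move: d0; rewrite lt0n -leqn0 -ltnS hd1.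
  exfalso.
  have da : (d %| a)%N by apply: (dvdn_trans (dvdn_gcdl _ _)); apply: dvdn_gcdl.
  have db : (d %| b)%N by apply: (dvdn_trans (dvdn_gcdl _ _)); apply: dvdn_gcdr.
  have dc : (d %| c)%N by apply: dvdn_gcdr.
  have de : (d %| e)%N by rewrite -habc !dvdn_add.
  case: (dse) => e0 se emin.
  pose cls w := (posn s x e w %% d)%N.
  have posE w : (s ^+ posn s x e w) x = w by rewrite posn_spec // pxT inE.
  have clsP i : cls ((s ^+ i) x) = (i %% d)%N.
    by rewrite /cls -(modn_dvdm _ de) posn_mod // modn_dvdm.
  have cls_s w : cls (s w) = ((cls w).+1 %% d)%N.
    rewrite -{1}(posE w) -permM -expgSr clsP /cls.
    by rewrite -addn1 -(addn1 (_ %% d)) modnDml.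
  have cl0 : cls x = 0%N by have := clsP 0%N; rewrite expg0 perm1 mod0n.
  have cly : cls y = 0%N by rewrite -sa clsP; apply/eqP.
  have clz : cls z = 0%N by rewrite zab clsP; apply/eqP; exact: (dvdn_add da db).
  have fcl := fc _ cls (etrans cl0 (esym cly)) (etrans cly (esym clz)).
  have cls_t i w : cls (t ((s ^+ i) w)) = ((cls (t w) + i) %% d)%N.
    elim: i w => [|i IH] w; first by rewrite expg0 perm1 addn0 /cls modn_mod.
    rewrite expgSr permM -(fcl (t (s _))) t_step cls_s IH.
    by rewrite -addn1 modnDml -addnA addn1.
  have hgen : forall g, g \in [set s; t] -> forall u v,
      cls u = cls v -> cls (g u) = cls (g v).
    move=> g; rewrite !inE => /orP [] /eqP -> u v huv; first by rewrite !cls_s huv.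
    have -> : t u = t ((s ^+ posn s x e u) x) by rewrite posE.
    have -> : t v = t ((s ^+ posn s x e v) x) by rewrite posE.
    rewrite !cls_t -modnDmr -[in RHS]modnDmr.
    by have : cls u = cls v := huv; rewrite /cls => ->.
  have := prim _ _ (@rel_block _ _ _ cls x hgen).
  case.
  - by apply/set0Pn; exists x; rewrite inE.
  - move=> D1; have h := two [set v | cls v == cls x].
    rewrite D1 in h; move: h; rewrite !inE eqxx cly cl0.
    by move=> /(_ isT isT).
  - move=> DT.
    have : s x \in [set v | cls v == cls x] by rewrite DT inE.
    by rewrite inE cls_s cl0 modn_small.
case=> [[u0 hu0] hgcd] D D0 hD.
have pxT : porbit s x = setT.
  by rewrite -hu0; apply/eqP; rewrite eq_porbit_mem hu0 inE.
case: (boolP (#|D| == 1%N)) => [/eqP|D1]; first by left.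
right.
case/set0Pn: D0 => u uD.
have : x \in porbit s u by rewrite porbit_sym pxT inE.
case/porbitP => m xm.
set p := s ^+ m.
set D' := p @: D.
have hD' : forall g, g \in G -> g @: D' = D' \/ [disjoint g @: D' & D'].
  move=> g gG.
  have hG : p * g * p^-1 \in G by rewrite !groupM ?groupV ?groupX.
  have -> : g @: D' = p @: ((p * g * p^-1) @: D).
    by rewrite -!imset_comp; apply: eq_imset => w /=; rewrite !permM permKV.
  case: (hD _ hG) => [->|hd]; [by left|right].
  rewrite -setI_eq0 -imsetI; last by move=> ? ? _ _; apply: perm_inj.
  by move: hd; rewrite -setI_eq0 => /eqP ->; rewrite imset0.
have xD' : x \in D' by rewrite xm imset_f.
have cD' : #|D'| = #|D| by rewrite card_imset //; apply: perm_inj.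
have [w wD wx] : exists2 w, w \in D' & w != x.
  case: (boolP (D' \subset [set x])) => sub; last first.
    by case/subsetPn: sub => w wD; rewrite inE => wx; exists w.
  exfalso; move: D1; rewrite -cD'; apply/negP; rewrite negbK eqn_leq.
  have h1 : (#|D'| <= 1)%N by rewrite -(cards1 x) subset_leq_card.
  by rewrite h1 /=; apply/card_gt0P; exists x.
have ccD : cc @: D' = D'.
  case: (hD' _ cG) => [//|hd]; exfalso.
  move: hd; rewrite -setI_eq0 => /eqP hd.
  have: forall q, q \in cc @: D' -> q \in D' -> False.
    move=> q q1 q2; have : q \in cc @: D' :&: D' by rewrite in_setI q1 q2.
    by rewrite hd inE.
  move=> F.
  case: (eqVneq w y) => [wy|wy].
    by apply: (F x) => //; rewrite -cy -wy imset_f.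
  case: (eqVneq w z) => [wz|wz].
    by apply: (F z); [rewrite -cx imset_f|rewrite -wz].
  by apply: (F w) => //; rewrite -{1}(cfix w) // imset_f.
have zD' : z \in D' by rewrite -ccD -cx imset_f.
have yD' : y \in D' by rewrite -ccD -cz imset_f.
have Pa : (s ^+ a) @: D' = D'.
  by apply: (blockP _ _ (groupX _ sG) (hD' _ (groupX _ sG)) x) => //; rewrite sa.
have Pb : (s ^+ b) @: D' = D'.
  by apply: (blockP _ _ (groupX _ sG) (hD' _ (groupX _ sG)) y) => //; rewrite sb.
have Pc : (s ^+ c) @: D' = D'.
  by apply: (blockP _ _ (groupX _ sG) (hD' _ (groupX _ sG)) z) => //; rewrite sc.
have Pg (i j : nat) : (0 < i)%N -> (s ^+ i) @: D' = D' -> (s ^+ j) @: D' = D' ->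
    (s ^+ gcdn i j) @: D' = D'.
  move=> i0 hi hj; case: (Bezoutl j i0) => k _ /dvdnP [q hq].
  apply: (Psub _ (k * j)%N); last exact: Pmul.
  by rewrite addnC hq Pmul.
have P1 : (s ^+ 1) @: D' = D'.
  rewrite -hgcd; apply: (Pg) => //; first by rewrite gcdn_gt0 a0.
  exact: Pg.
have DT' : D' = setT.
  apply/setP=> v; rewrite inE.
  have : v \in porbit s x by rewrite pxT inE.
  case/porbitP => k ->.
  by rewrite -(Pmul _ _ k P1) muln1 imset_f.
apply/eqP; rewrite eqEcard subsetT /= -cD' DT' leqnn //.
Qed.
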